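(* Let $m\ge2$ be an integer and let $X$ be the conjugacy class of all transpositions in $S_m$, viewed as a quandle under conjugation $x^y=y^{-1}xy$. Then for every positive integer $n$ and every $s\in X^n$ whose entries generate $X$, the restriction to the stabilizer of $s$ in $B_n$ of the homomorphism $B_n\to S_n$ is surjective.
   Context: Entries generate $X$ if no proper subset of $X$ closed under $x^y$ contains them all. $B_n$ acts on $X^n$ from the right by $(\dots,x_i,x_{i+1},\dots)^{\sigma_i}=(\dots,x_{i+1},x_i^{x_{i+1}},\dots)$, and $B_n\to S_n$ sends $\sigma_i\mapsto(i\ i+1)$. *)

(* Defs.v *)
From mathcomp Require Import all_boot all_fingroup.
Set Implicit Arguments. Unset Strict Implicit. Unset Printing Implicit Defensive.
Local Open Scope group_scope.

(* Quandle X = conjugacy class of transpositions of S_m, operation x^y = y^-1 x y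
   (MathComp's conjg). *)
Definition is_transposition (m : nat) (x : 'S_m) : bool :=
  [exists i : 'I_m, exists j : 'I_m, (i != j) && (x == tperm i j)].

Definition transpositions (m : nat) : {set 'S_m} :=
  [set x : 'S_m | is_transposition x].

Definition generates_quandle (m : nat) (s : seq 'S_m) : Prop :=
  forall Y : {set 'S_m},
    Y \subset transpositions m ->
    (forall x y, x \in Y -> y \in Y -> x ^ y \in Y) ->
    (forall x, x \in s -> x \in Y) ->
    Y = transpositions m.

(* Braid words: a letter (k, true) is sigma_{k+1}, (k, false) its inverse
   (0-based position k, acting on positions k and k+1). *)
Definition braid_letter := (nat * bool)%type.

Definition word_in_Bn (n : nat) (w : seq braid_letter) : bool :=
  all (fun l : braid_letter => l.1.+1 < n) w.

Definition letter_act (m : nat) (l : braid_letter) (s : seq 'S_m) : seq 'S_m :=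
  let k := l.1 in
  let a := nth 1 s k in
  let b := nth 1 s k.+1 in
  if l.2 then set_nth 1 (set_nth 1 s k b) k.+1 (a ^ b)
  else set_nth 1 (set_nth 1 s k (b ^ a^-1)) k.+1 a.

Fixpoint braid_act (m : nat) (w : seq braid_letter) (s : seq 'S_m) : seq 'S_m :=
  match w with
  | [::] => s
  | l :: w' => braid_act w' (letter_act l s)
  end.

(* The transposition (i j) in S_n for i, j < n (identity in the degenerate case n = 0). *)
Definition tperm_nat (n : nat) (i j : nat) : 'S_n :=
  match n as n0 return 'S_n0 with
  | 0 => 1
  | n'.+1 => tperm (inord i : 'I_n'.+1) (inord j)
  end.

Fixpoint braid_perm (n : nat) (w : seq braid_letter) : 'S_n :=
  match w with
  | [::] => 1
  | l :: w' => tperm_nat n l.1 l.1.+1 * braid_perm n w'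
  end.

(* Main.v *)
Require Import Defs.
From mathcomp Require Import all_boot all_fingroup.
Set Implicit Arguments. Unset Strict Implicit. Unset Printing Implicit Defensive.
Local Open Scope group_scope.

Lemma braid_act_cat m (w1 w2 : seq braid_letter) (s : seq 'S_m) :
  braid_act (w1 ++ w2) s = braid_act w2 (braid_act w1 s).
Proof. by elim: w1 s => //= l w IH s; rewrite IH. Qed.

Lemma braid_perm_cat n (w1 w2 : seq braid_letter) :
  braid_perm n (w1 ++ w2) = braid_perm n w1 * braid_perm n w2.
Proof. by elim: w1 => [|l w IH] /=; rewrite ?mul1g // IH mulgA. Qed.

Lemma letter_true m (s1 s2 : seq 'S_m) a b :
  letter_act (size s1, true) (s1 ++ a :: b :: s2) = s1 ++ b :: a ^ b :: s2.
Proof.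
rewrite /letter_act /= !nth_cat ltnn subnn /=.
have -> : (size s1).+1 < size s1 = false by rewrite ltnNge leqnSn.
rewrite subSnn /=.
by elim: s1 => //= x s1 ->.
Qed.

Lemma letter_false m (s1 s2 : seq 'S_m) a b :
  letter_act (size s1, false) (s1 ++ a :: b :: s2) = s1 ++ b ^ a^-1 :: a :: s2.
Proof.
rewrite /letter_act /= !nth_cat ltnn subnn /=.
have -> : (size s1).+1 < size s1 = false by rewrite ltnNge leqnSn.
rewrite subSnn /=.
by elim: s1 => //= x s1 ->.
Qed.

Lemma split2 m (s : seq 'S_m) k : k.+1 < size s ->
  s = take k s ++ nth 1 s k :: nth 1 s k.+1 :: drop k.+2 s.
Proof.
move=> hk; by rewrite -{1}(cat_take_drop k s) (drop_nth 1 (ltnW hk)) (drop_nth 1 hk).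
Qed.

Lemma invol_inv (G : finGroupType) (a : G) : a * a = 1 -> a^-1 = a.
Proof. by move=> h; apply/eqP; rewrite eq_invg_mul h. Qed.

Lemma braid_id1 (G : finGroupType) (a b : G) : a * a = 1 -> b * b = 1 ->
  a * b * a = b * a * b -> b ^ (a ^ b) = a.
Proof.
move=> ha hb hab; rewrite !conjgE !invMg !invol_inv //.
rewrite !mulgA -(mulgA (b * a * b) b b) hb mulg1.
by rewrite -hab -(mulgA (a * b) a a) ha mulg1 -mulgA hb mulg1.
Qed.

Lemma braid_id2 (G : finGroupType) (a b : G) : a * a = 1 -> b * b = 1 ->
  a * b * a = b * a * b -> (a ^ b) ^ a = b.
Proof.
move=> ha hb hab; rewrite !conjgE !invol_inv // !mulgA.
by rewrite hab -(mulgA (b * a) b b) hb mulg1 -mulgA ha mulg1.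
Qed.

Lemma tperm_nat2 n i j : tperm_nat n i j * tperm_nat n i j = 1.
Proof. by case: n => [|n] /=; rewrite ?mulg1 ?tperm2. Qed.

Lemma tperm_natJ n i j : i < j -> j.+1 < n ->
  tperm_nat n j j.+1 * (tperm_nat n i j * tperm_nat n j j.+1) = tperm_nat n i j.+1.
Proof.
case: n => // n hij hj /=.
have ne : forall a b, a < n.+1 -> b < n.+1 -> a != b -> (inord a : 'I_n.+1) != inord b.
  by move=> a b ha hb; apply: contra => /eqP /(congr1 val) /=; rewrite !inordK // => ->.
have hi : i < n.+1 by rewrite (ltn_trans hij) // ltnW.
rewrite -{1}(tpermV (inord j) (inord j.+1)) -conjgE tpermJ tpermL tpermD //.
- by apply: ne => //; [apply: ltnW | rewrite gtn_eqF].
- by apply: ne => //; rewrite gtn_eqF // (ltn_trans hij).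
Qed.

Lemma key m n (s : seq 'S_m) i j : size s = n -> i < j -> j < n ->
  nth 1 s i * nth 1 s i = 1 -> nth 1 s j * nth 1 s j = 1 ->
  nth 1 s i * nth 1 s j * nth 1 s i = nth 1 s j * nth 1 s i * nth 1 s j ->
  exists w, [/\ word_in_Bn n w, braid_act w s = s & braid_perm n w = tperm_nat n i j].
Proof.
elim: j s i => // j IH s i hs hij hj.
have hsj : j.+1 < size s by rewrite hs.
move: (split2 hsj); set s1 := take j s; set x := nth 1 s j;
  set y := nth 1 s j.+1; set s2 := drop j.+2 s => es.
have hs1 : size s1 = j by rewrite size_take (ltn_trans _ hsj).
clearbody s1 x y s2; subst s.
case: (ltnP i j) => [lij | gij]; last first.
  have eij : i = j by apply/eqP; rewrite eqn_leq gij -ltnS hij.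
  rewrite eij -hs1 nth_cat ltnn subnn /= => ha hb hab.
  exists [:: (size s1, true); (size s1, true); (size s1, true)]; split.
  - by rewrite /word_in_Bn /= hs1 hj.
  - by rewrite /= !letter_true braid_id1 // braid_id2.
  - by simpl; rewrite mulg1 mulgA tperm_nat2 mul1g.
rewrite nth_cat hs1 lij => ha hb hab.
have hs' : size (s1 ++ y :: x ^ y :: s2) = n by rewrite -hs !size_cat.
have := IH _ i hs' lij (ltnW hj); rewrite !nth_cat hs1 lij ltnn subnn /=.
move=> /(_ ha hb hab) [w' [hw' ew' pw']].
exists ((size s1, true) :: w' ++ [:: (size s1, false)]); split.
- by move: hw'; rewrite /word_in_Bn /= all_cat => -> /=; rewrite hs1 hj.
- by rewrite /= letter_true braid_act_cat ew' /= letter_false conjgK.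
- by simpl; rewrite braid_perm_cat pw' /= mulg1 hs1 tperm_natJ.
Qed.
Lemma tperm_moved (T : finType) (a b z : T) : tperm a b z != z -> z = a \/ z = b.
Proof.
case: (tpermP a b z) => [->|->|]; [by left|by right|].
by move=> _ _; rewrite eqxx.
Qed.

Lemma tperm_braid (T : finType) (a b d : T) : a != b -> a != d ->
  tperm a b * tperm a d * tperm a b = tperm a d * tperm a b * tperm a d.
Proof.
move=> hab had.
rewrite -{1}(tpermV a b) -mulgA -conjgE tpermJ.
rewrite -{1}(tpermV a d) -mulgA -conjgE tpermJ.
rewrite tpermL tpermL.
case: (eqVneq d b) => [-> | hdb]; first by rewrite tpermR tpermC.
rewrite tpermD // 1?eq_sym // tpermD // 1?eq_sym // tpermC //.
Qed.

Lemma share_braid (T : finType) (a b c d : T) : a != b -> c != d ->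
  tperm c d a != a ->
  tperm a b * tperm c d * tperm a b = tperm c d * tperm a b * tperm c d.
Proof.
move=> hab hcd /tperm_moved [] ea; subst a.
  by rewrite tperm_braid.
by rewrite (tpermC c d) tperm_braid // eq_sym.
Qed.

Unset Implicit Arguments.
Theorem proposition4p40 (m : nat) (hm : 2 <= m) (n : nat) (hn : 0 < n)
  (s : seq 'S_m) (hsize : size s = n)
  (hX : all (@is_transposition m) s) (hgen : generates_quandle s) :
  forall pi : 'S_n,
    exists w : seq braid_letter,
      [/\ word_in_Bn n w, braid_act w s = s & braid_perm n w = pi].
Proof.
case: n hn hsize => // n _ hsize.
set N := n.+1.
pose P (p : 'S_N) := exists w : seq braid_letter,
      [/\ word_in_Bn N w, braid_act w s = s & braid_perm N w = p].
have P1 : P 1 by exists [::].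
have PM : forall p q, P p -> P q -> P (p * q).
  move=> p q [w1 [h1 e1 p1]] [w2 [h2 e2 p2]]; exists (w1 ++ w2); split.
  - by move: h1 h2; rewrite /word_in_Bn all_cat => -> ->.
  - by rewrite braid_act_cat e1 e2.
  - by rewrite braid_perm_cat p1 p2.
pose sj (j : 'I_N) := nth 1 s j.
have hT : forall j : 'I_N, exists a b, a != b /\ sj j = tperm a b.
  move=> j; have := (all_nthP 1 hX) j; rewrite hsize ltn_ord => /(_ isT).
  by case/existsP => a /existsP [b /andP [hab /eqP E]]; exists a, b.
pose e : rel 'I_N := fun i j => sj i * sj j * sj i == sj j * sj i * sj j.
have esym : symmetric e by move=> i j; rewrite /e eq_sym.
have Pe : forall i j, e i j -> P (tperm i j).
  have invo : forall j, sj j * sj j = 1.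
    by move=> j; have [a [b [_ ->]]] := hT j; rewrite tperm2.
  suff H : forall i j : 'I_N, i < j -> e i j -> P (tperm i j).
    move=> i j; case: (ltngtP i j) => [lij|lji|/val_inj ->]; first by apply: H.
      by rewrite esym tpermC; apply: H.
    by rewrite tperm1.
  move=> i j lij /eqP eij.
  have [w [h1 h2 h3]] := key hsize lij (ltn_ord j) (invo i) (invo j) eij.
  by exists w; split => //; rewrite h3 /= !inord_val.
have Pstep : forall x y : 'I_N, P (tperm ord0 x) -> e x y -> P (tperm ord0 y).
  move=> x y Px exy.
  case: (eqVneq x ord0) => [ex | hx0]; first by rewrite -ex; apply: Pe.
  case: (eqVneq y ord0) => [-> | hy0]; first by rewrite tperm1.
  case: (eqVneq x y) => [<- //| hxy].
  have -> : tperm ord0 y = tperm x y * (tperm ord0 x * tperm x y).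
    by rewrite -{1}(tpermV x y) -conjgE tpermJ tpermL tpermD.
  exact: PM (Pe _ _ exy) (PM _ _ Px (Pe _ _ exy)).
have Pconn : forall j, connect e ord0 j -> P (tperm ord0 j).
  move=> j /connectP [p pth ->].
  suff H : forall p x, P (tperm ord0 x) -> path e x p -> P (tperm ord0 (last x p)).
    by apply: H => //; rewrite tperm1.
  elim=> [//| y q IH] x Px /= /andP [exy pth'].
  exact: IH (Pstep _ _ Px exy) pth'.
have Conn : forall j, connect e ord0 j.
  pose C := [set j | connect e ord0 j].
  pose V := [set x : 'I_m | [exists j in C, sj j x != x]].
  pose Y := [set t : 'S_m | [exists a, exists b,
              [&& a != b, t == tperm a b & (a \in V) == (b \in V)]]].
  have side : forall c d p, (c \in V) = (d \in V) -> (tperm c d p \in V) = (p \in V).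
    by move=> c d p hcd; case: tpermP => [->|->|//]; rewrite hcd.
  have shareE : forall k j z, sj j z != z -> sj k z != z -> e k j.
    move=> k j z hj hk.
    have [a [b [hab Ej]]] := hT j; have [c [d [hcd Ek]]] := hT k.
    rewrite /e Ek Ej; rewrite Ek in hk; rewrite Ej in hj.
    case/tperm_moved: hj => ez; subst z.
      by rewrite (share_braid hab hcd hk).
    by rewrite (tpermC a b) (share_braid _ hcd hk) // eq_sym.
  have closedC : forall k j, k \in C -> e k j -> j \in C.
    by move=> k j; rewrite !inE => /connect_trans kC ekj; apply: kC; apply: connect1.
  have YT : Y = transpositions m.
    apply: hgen.
    - apply/subsetP => t; rewrite !inE => /existsP [a /existsP [b /and3P [hab /eqP -> _]]].
      by apply/existsP; exists a; apply/existsP; exists b; rewrite hab eqxx.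
    - move=> x y; rewrite !inE => /existsP [a /existsP [b /and3P [hab /eqP -> hV]]].
      move=> /existsP [c /existsP [d /and3P [hcd /eqP -> /eqP hV']]].
      apply/existsP; exists (tperm c d a); apply/existsP; exists (tperm c d b).
      by rewrite tpermJ eqxx (inj_eq perm_inj) hab !side.
    - move=> x xs.
      have hj : index x s < N by rewrite /N -hsize index_mem.
      pose J := Ordinal hj.
      have xJ : x = sj J by rewrite /sj /= nth_index.
      have [a [b [hab Ej]]] := hT J.
      rewrite inE; apply/existsP; exists a; apply/existsP; exists b.
      rewrite hab xJ Ej eqxx /=.
      case: (boolP (J \in C)) => JC.
        have aV : a \in V.
          by rewrite inE; apply/existsP; exists J; rewrite JC /= Ej tpermL eq_sym.
        have bV : b \in V.
          by rewrite inE; apply/existsP; exists J; rewrite JC /= Ej tpermR.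
        by rewrite aV bV.
      have nV : forall z, sj J z != z -> z \notin V.
        move=> z hz; apply/negP; rewrite inE => /existsP [k /andP [kC hk]].
        by move/negP: JC; apply; apply: closedC kC (shareE k J z hz hk).
      have aV : a \notin V by apply: nV; rewrite Ej tpermL eq_sym.
      have bV : b \notin V by apply: nV; rewrite Ej tpermR.
      by rewrite (negPf aV) (negPf bV).
  have V_all : forall y, y \in V.
    move=> y; apply/negPn/negP => yV.
    have [a [b [hab E0]]] := hT ord0.
    have aV : a \in V.
      by rewrite inE; apply/existsP; exists ord0; rewrite inE connect0 /= E0 tpermL eq_sym.
    have hay : a != y by apply: contraNneq yV => <-.
    have : tperm a y \in Y.
      by rewrite YT inE; apply/existsP; exists a; apply/existsP; exists y; rewrite hay eqxx.
    rewrite inE => /existsP [a' /existsP [b' /and3P [hab' /eqP E' hV]]].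
    have mv : forall z, tperm a' b' z != z -> (z \in V) = (a' \in V).
      by move=> z /tperm_moved [] ->; rewrite // (eqP hV).
    have h1 := mv a; have h2 := mv y.
    rewrite -E' tpermL in h1; rewrite -E' tpermR in h2.
    have h1' : (a \in V) = (a' \in V) by apply: h1; rewrite eq_sym.
    by move: h1' (h2 hay); rewrite aV (negPf yV) => <-.
  move=> j; have [a [b [hab Ej]]] := hT j.
  have := V_all a; rewrite inE => /existsP [k /andP [kC hk]].
  have : j \in C by apply: closedC kC (shareE k j a _ hk); rewrite Ej tpermL eq_sym.
  by rewrite inE.
have Pall : forall x y : 'I_N, P (tperm x y).
  move=> x y; case: (eqVneq x ord0) => [-> | hx0]; first exact: (Pconn _ (Conn _)).
  case: (eqVneq y ord0) => [-> | hy0]; first by rewrite tpermC; exact: (Pconn _ (Conn _)).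
  case: (eqVneq x y) => [-> | hxy]; first by rewrite tperm1.
  have -> : tperm x y = tperm ord0 x * (tperm ord0 y * tperm ord0 x).
    by rewrite -{1}(tpermV ord0 x) -conjgE tpermJ tpermL tpermD // eq_sym.
  by apply: (PM); [|apply: (PM)]; apply: (Pconn _ (Conn _)).
move=> pi; have [ts -> _] := prod_tpermP pi.
elim: ts => [|[a b] ts IH]; first by rewrite big_nil.
by rewrite big_cons; apply: (PM).
Qed.
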